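(* Let $A$ be an evolution algebra with natural basis $B=\{e_i:i\in\Lambda\}$ and structure matrix $(\omega_{ki})$, and let $M$ be a modular ideal of $A$ with support $\Lambda_M$. Then: (i) for each $i\in\Lambda$, $e_i\in M$ if and only if $e_i^2\in M$; (ii) $M=\mathrm{lin}\{e_i:i\in\Lambda_M\}$; consequently $M$ is proper if and only if $\Lambda_M\neq\Lambda$; (iii) $\Lambda\setminus\Lambda_M$ is finite, and if $u$ is any modular unit for $M$ then $\Lambda_M\cup\Lambda_u=\Lambda$; (iv) if $M$ is proper, then $\omega_{ii}\neq 0$ for every $i\in\Lambda\setminus\Lambda_M$, the element $u_0=\sum_{i\in\Lambda\setminus\Lambda_M}\frac{1}{\omega_{ii}}e_i$ is a modular unit for $M$, and an element $u\in A$ is a modular unit for $M$ if and only if $u=m+u_0$ for some $m\in M$.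
   Context: An evolution algebra is an algebra $A$ over $\mathbb{K}\in\{\mathbb{R},\mathbb{C}\}$ with a basis $B=\{e_i:i\in\Lambda\}$ (natural basis) such that $e_ie_j=0$ for $i\neq j$; write $e_i^2=\sum_k\omega_{ki}e_k$. For $a=\sum_i\alpha_ie_i$, its support is $\Lambda_a=\{i:\alpha_i\neq 0\}$; for a nonempty $S\subseteq A$, $\Lambda_S=\bigcup_{a\in S}\Lambda_a$. An ideal $M$ of the (commutative) algebra $A$ is modular if there exists $u\in A$ (a modular unit for $M$) with $a-au\in M$ for all $a\in A$. *)

(* Defs.v *)
(* Evolution algebras with an arbitrary (possibly infinite)
   natural basis indexed by I; elements of A are finitely supported
   coordinate functions I -> K. *)
From HB Require Import structures.
From mathcomp Require Import all_boot all_order all_algebra.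
From Stdlib Require Import ClassicalEpsilon.
Set Implicit Arguments. Unset Strict Implicit. Unset Printing Implicit Defensive.
Import Order.TTheory GRing.Theory Num.Theory.
Local Open Scope ring_scope.

Section Evo.
Variables (K : fieldType) (I : eqType).

Definition evo_elem (a : I -> K) : Prop :=
  exists s : seq I, forall i, a i != 0 -> i \in s.

Definition supp_seq (a : I -> K) : seq I :=
  epsilon (inhabits [::]) (fun s : seq I => uniq s /\ forall i, a i != 0 -> i \in s).

Definition ebasis (j : I) : I -> K := fun i => if i == j then 1 else 0.

Definition evo_add (a b : I -> K) : I -> K := fun i => a i + b i.
Definition evo_sub (a b : I -> K) : I -> K := fun i => a i - b i.
Definition evo_scale (c : K) (a : I -> K) : I -> K := fun i => c * a i.

(* evolution product with structure matrix om: e_i^2 = sum_k om k i e_k,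
   e_i e_j = 0 for i <> j, extended bilinearly *)
Definition evo_mul (om : I -> I -> K) (a b : I -> K) : I -> K :=
  fun k => \sum_(i <- supp_seq a) om k i * (a i * b i).

Definition structure_matrix (om : I -> I -> K) : Prop :=
  forall i, evo_elem (fun k => om k i).

Definition evo_ideal (om : I -> I -> K) (M : (I -> K) -> Prop) : Prop :=
  [/\ forall a, M a -> evo_elem a,
      M (fun _ => 0),
      forall a b, M a -> M b -> M (evo_add a b),
      forall c a, M a -> M (evo_scale c a)
    & forall a m, evo_elem a -> M m -> M (evo_mul om a m) /\ M (evo_mul om m a)].

Definition evo_modular_unit (om : I -> I -> K) (M : (I -> K) -> Prop) (u : I -> K) :=
  evo_elem u /\ forall a, evo_elem a -> M (evo_sub a (evo_mul om a u)).

Definition evo_modular_ideal om M := evo_ideal om M /\ exists u, evo_modular_unit om M u.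

Definition evo_supp (M : (I -> K) -> Prop) (i : I) : Prop := exists a, M a /\ a i != 0.

Definition evo_lin (S : I -> Prop) (a : I -> K) : Prop :=
  exists (s : seq I) (c : I -> K), (forall i, i \in s -> S i) /\
    a = (fun k => \sum_(i <- s) c i * ebasis i k).

Definition evo_proper (M : (I -> K) -> Prop) : Prop :=
  exists a, evo_elem a /\ ~ M a.

End Evo.

(* Main.v *)
Require Import Defs.
From HB Require Import structures.
From mathcomp Require Import all_boot all_order all_algebra.
From mathcomp Require Import ring.
From Stdlib Require Import ClassicalEpsilon Classical FunctionalExtensionality.
Import Order.TTheory GRing.Theory Num.Theory.
Local Open Scope ring_scope.

Lemma supp_seqP (K : fieldType) (I : eqType) (a : I -> K) : evo_elem a ->
  uniq (supp_seq a) /\ (forall i, a i != 0 -> i \in supp_seq a).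
Proof.
move=> [s Hs].
have H : exists x : seq I, uniq x /\ (forall i, a i != 0 -> i \in x).
  exists (undup s); split; first exact: undup_uniq.
  by move=> i /Hs; rewrite mem_undup.
exact: (epsilon_spec (inhabits [::]) _ H).
Qed.

Arguments supp_seqP {K I a}.

Lemma my_sum_delta (K : fieldType) (I : eqType) (s : seq I) (G : I -> K) j :
  uniq s -> (G j != 0 -> j \in s) ->
  \sum_(i <- s) (if i == j then G i else 0) = G j.
Proof.
move=> us Hj; rewrite -big_mkcond.
have [js|njs] := boolP (j \in s).
  rewrite -big_filter.
  have -> : [seq i <- s | i == j] = [:: j] by exact: filter_pred1_uniq.
  by rewrite big_seq1.
have /eqP -> : G j == 0 by exact: (contraNT Hj njs).
rewrite big1_seq // => i /andP [/eqP -> Hi].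
by rewrite Hi in njs.
Qed.

Lemma ebasis_elem (K : fieldType) (I : eqType) (i : I) : evo_elem (ebasis K i).
Proof. by exists [:: i] => j; rewrite inE /ebasis; case: (j == i); rewrite // eqxx. Qed.

Arguments ebasis_elem K {I} i.

Lemma mul_e_l (K : fieldType) (I : eqType) om (i : I) (b : I -> K) :
  evo_mul om (ebasis K i) b = fun k => om k i * b i.
Proof.
apply: functional_extensionality => k; rewrite /evo_mul.
have [us Hs] := supp_seqP (ebasis_elem K i).
rewrite (eq_bigr (fun j => if j == i then om k j * b j else 0)).
  apply: my_sum_delta => // _; apply: Hs; rewrite /ebasis eqxx; exact: oner_neq0.
by move=> j _; rewrite /ebasis; case: (j == i); rewrite ?mul1r ?mul0r ?mulr0.
Qed.

Lemma evo_elem_add (K : fieldType) (I : eqType) (a b : I -> K) :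
  evo_elem a -> evo_elem b -> evo_elem (evo_add a b).
Proof.
move=> [s Hs] [t Ht]; exists (s ++ t) => i; rewrite mem_cat /evo_add.
case: (eqVneq (a i) 0) => [->|/Hs -> //]; rewrite add0r => /Ht ->; exact: orbT.
Qed.

Lemma evo_elem_sub (K : fieldType) (I : eqType) (a b : I -> K) :
  evo_elem a -> evo_elem b -> evo_elem (evo_sub a b).
Proof.
move=> [s Hs] [t Ht]; exists (s ++ t) => i; rewrite mem_cat /evo_sub.
case: (eqVneq (a i) 0) => [->|/Hs -> //]; rewrite sub0r oppr_eq0 => /Ht ->; exact: orbT.
Qed.

Arguments evo_elem_add {K I a b}.
Arguments evo_elem_sub {K I a b}.

Lemma mul_subr (K : fieldType) (I : eqType) om (a b c : I -> K) :
  evo_mul om a (evo_sub b c) = evo_sub (evo_mul om a b) (evo_mul om a c).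
Proof.
apply: functional_extensionality => k; rewrite /evo_mul /evo_sub -sumrB.
by apply: eq_bigr => i _; ring.
Qed.

Lemma mul_addr (K : fieldType) (I : eqType) om (a b c : I -> K) :
  evo_mul om a (evo_add b c) = evo_add (evo_mul om a b) (evo_mul om a c).
Proof.
apply: functional_extensionality => k; rewrite /evo_mul /evo_add -big_split.
by apply: eq_bigr => i _ /=; rewrite !mulrDr.
Qed.

Lemma M_sum (K : fieldType) (I : eqType) om (M : (I -> K) -> Prop) (s : seq I) (c : I -> K) :
  evo_ideal om M -> (forall i, i \in s -> M (ebasis K i)) ->
  M (fun k => \sum_(i <- s) c i * ebasis K i k).
Proof.
case=> _ H0 Hadd Hsc _; elim: s => [|j s IH] Hs.
  have -> : (fun k => \sum_(i <- [::]) c i * ebasis K i k) = (fun _ => 0).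
    by apply: functional_extensionality => k; rewrite big_nil.
  exact: H0.
have -> : (fun k => \sum_(i <- j :: s) c i * ebasis K i k) =
  evo_add (evo_scale (c j) (ebasis K j)) (fun k => \sum_(i <- s) c i * ebasis K i k).
  by apply: functional_extensionality => k; rewrite big_cons.
apply: Hadd; first by apply: Hsc; apply: Hs; exact: mem_head.
by apply: IH => i Hi; apply: Hs; rewrite inE Hi orbT.
Qed.

Lemma decomp (K : fieldType) (I : eqType) (a : I -> K) : evo_elem a ->
  a = fun k => \sum_(i <- [seq i <- supp_seq a | a i != 0]) a i * ebasis K i k.
Proof.
move=> Ha; have [us Hs] := supp_seqP Ha.
apply: functional_extensionality => k.
rewrite (eq_bigr (fun i => if i == k then a i else 0)).
  apply/esym; apply: my_sum_delta; first exact: filter_uniq.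
  by move=> Hk; rewrite mem_filter Hk; exact: Hs.
by move=> i _; rewrite /ebasis (eq_sym k i); case: (i == k); rewrite ?mulr1 ?mulr0.
Qed.

Arguments decomp K {I a}.

Theorem theorem3p2 (K : fieldType) (I : eqType) (om : I -> I -> K)
  (M : (I -> K) -> Prop) :
  structure_matrix om -> evo_modular_ideal om M ->
  (* (i) *)
  (forall i, M (ebasis K i) <-> M (evo_mul om (ebasis K i) (ebasis K i))) /\
  (* (ii) *)
  (forall a, M a <-> evo_lin (evo_supp M) a) /\
  (evo_proper M <-> exists i, ~ evo_supp M i) /\
  (* (iii) *)
  (exists s : seq I, forall i, ~ evo_supp M i -> i \in s) /\
  (forall u, evo_modular_unit om M u -> forall i, evo_supp M i \/ u i != 0) /\
  (* (iv) *)
  (evo_proper M ->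
     (forall i, ~ evo_supp M i -> om i i != 0) /\
     forall u0 : I -> K,
       (forall i, evo_supp M i -> u0 i = 0) ->
       (forall i, ~ evo_supp M i -> u0 i = (om i i)^-1) ->
       evo_modular_unit om M u0 /\
       (forall u, evo_modular_unit om M u <->
                  exists m, M m /\ u = evo_add m u0)).
Proof.
move=> Hom [HI [u Hu]].
have HI' := HI; case: HI' => Helem H0 Hadd Hsc Hmul.
have e_elem := @ebasis_elem K I.
have E2 : forall i, evo_mul om (ebasis K i) (ebasis K i) = (fun k => om k i).
  move=> i; rewrite mul_e_l; apply: functional_extensionality => k.
  by rewrite /ebasis eqxx mulr1.
have Hunit : forall v, evo_modular_unit om M v ->
    forall i, M (fun k => ebasis K i k - om k i * v i).
  move=> v [_ Hv] i; have := Hv _ (e_elem i); rewrite /evo_sub mul_e_l.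
  by move=> H; exact H.
have Pi : forall i, M (ebasis K i) <-> M (fun k => om k i).
  move=> i; split.
    by move=> H; rewrite -E2; exact: (Hmul _ _ (e_elem i) H).1.
  move=> H; have := Hadd _ _ (Hunit u Hu i) (Hsc (u i) _ H).
  have E : evo_add (fun k => ebasis K i k - om k i * u i)
                           (evo_scale (u i) (fun k => om k i)) = ebasis K i.
    by apply: functional_extensionality => k; rewrite /evo_add /evo_scale; ring.
  by rewrite E.
have L1 : forall i, evo_supp M i -> M (ebasis K i).
  move=> i [m [Hm Hmi]]; apply/Pi.
  have := Hsc (m i)^-1 _ (Hmul _ _ (e_elem i) Hm).1; rewrite mul_e_l.
  have -> : evo_scale (m i)^-1 (fun k => om k i * m i) = fun k => om k i.
    apply: functional_extensionality => k.
    by rewrite /evo_scale mulrCA mulVf // mulr1.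
  by [].
have Lin : forall a, evo_elem a -> (forall k, a k != 0 -> evo_supp M k) -> M a.
  move=> a Ha Hk; rewrite (decomp K Ha); apply: (@M_sum _ _ _ _ _ _ HI) => // i.
  by rewrite mem_filter => /andP [Hai _]; apply: L1; exact: Hk.
have F : forall v, evo_modular_unit om M v -> forall i, ~ evo_supp M i ->
    om i i * v i = 1.
  move=> v Hv i Hi; have H := Hunit v Hv i.
  apply/eqP; rewrite eq_sym -subr_eq0.
  case: eqP => // /eqP Hne; exfalso; apply: Hi.
  exists (fun k => ebasis K i k - om k i * v i); split => //.
  by rewrite /ebasis eqxx.
have uinv : forall v, evo_modular_unit om M v -> forall i, ~ evo_supp M i ->
    v i = (om i i)^-1 /\ om i i != 0.
  move=> v Hv i Hi; have H := F v Hv i Hi.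
  have Hom0 : om i i != 0.
    apply/eqP => Z; move: H; rewrite Z mul0r => /eqP.
    by rewrite eq_sym oner_eq0.
  split => //.
  by rewrite -[(om i i)^-1]mulr1 -H mulKf.
have unz : forall v, evo_modular_unit om M v -> forall i, ~ evo_supp M i -> v i != 0.
  move=> v Hv i Hi; apply/eqP => Z; move: (F v Hv i Hi); rewrite Z mulr0 => /eqP.
  by rewrite eq_sym oner_eq0.
split; first by move=> i; rewrite E2; exact: Pi.
split.
  move=> a; split.
    move=> Ha; exists [seq i <- supp_seq a | a i != 0], a; split.
      by move=> i; rewrite mem_filter => /andP [Hai _]; exists a; split.
    exact: decomp (Helem _ Ha).
  by move=> [s [c [Hs ->]]]; apply: (@M_sum _ _ _ _ _ _ HI) => // i /Hs; exact: L1.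
split.
  split.
    move=> [a [Ha Hna]]; apply: NNPP => Hn; apply: Hna; apply: Lin => // k _.
    by apply: NNPP => Hk; apply: Hn; exists k.
  move=> [i Hi]; exists (ebasis K i); split => // Hei; apply: Hi.
  by exists (ebasis K i); split => //; rewrite /ebasis eqxx oner_eq0.
split.
  have [s Hs] := Hu.1; exists s => i Hi; apply: Hs; exact: unz Hu i Hi.
split.
  move=> v Hv i; case: (classic (evo_supp M i)) => H; [by left | right; exact: unz Hv i H].
move=> _; split; first by move=> i Hi; exact: (uinv u Hu i Hi).2.
move=> u0 Hu00 Hu0inv.
have Hu0e : evo_elem u0.
  have [s Hs] := Hu.1; exists s => i Hi; apply: Hs; apply: (unz u Hu i).
  by move=> Hsupp; move: Hi; rewrite Hu00 ?eqxx.
have Hdiff : forall v, evo_modular_unit om M v -> M (evo_sub v u0).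
  move=> v Hv; apply: Lin; first exact: evo_elem_sub Hv.1 Hu0e.
  move=> k Hk; apply: NNPP => Hn; move: Hk.
  by rewrite /evo_sub (uinv v Hv k Hn).1 Hu0inv // subrr eqxx.
have Hu0 : evo_modular_unit om M u0.
  split => // a Ha.
  have -> : evo_sub a (evo_mul om a u0) =
      evo_add (evo_sub a (evo_mul om a u)) (evo_mul om a (evo_sub u u0)).
    rewrite mul_subr; apply: functional_extensionality => k.
    rewrite /evo_add /evo_sub /=; ring.
  apply: Hadd; [exact: Hu.2 | exact: (Hmul _ _ Ha (Hdiff u Hu)).1].
split => // v; split.
  move=> Hv; exists (evo_sub v u0); split; first exact: Hdiff.
  by apply: functional_extensionality => k; rewrite /evo_add /evo_sub subrK.
move=> [m [Hm ->]]; split; first exact: evo_elem_add (Helem _ Hm) Hu0e.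
move=> a Ha.
have -> : evo_sub a (evo_mul om a (evo_add m u0)) =
    evo_add (evo_sub a (evo_mul om a u0)) (evo_scale (-1) (evo_mul om a m)).
  rewrite mul_addr; apply: functional_extensionality => k.
  rewrite /evo_add /evo_sub /evo_scale /=; ring.
apply: Hadd; [exact: (Hu0.2 a Ha) | apply: Hsc; exact: (Hmul _ _ Ha Hm).1].
Qed.
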